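(* Let $G$ be a finite multigraph without self-loops and let $G'$ be obtained from $G$ by a single channel-preserving move. Then $|\mathcal{C}(G)|=|\mathcal{C}(G')|$. If moreover $G$ is bipartite, then $|\mathcal{C}_B(G)|=|\mathcal{C}_B(G')|$ and $|\mathcal{C}_W(G)|=|\mathcal{C}_W(G')|$.
   Context: Multiple edges are allowed. For a vertex $v$, $N(v)$ is the multiset of neighbours of $v$, each neighbour appearing with multiplicity equal to the number of edges joining it to $v$; for a vertex set $C$, $|N(v)\cap C|$ counts elements of $N(v)$ lying in $C$ with multiplicity. A channel is a vertex set $C$ with $|N(v)\cap C|$ even for every vertex $v$ (empty set included); $\mathcal{C}(G)$ is the set of channels, and for bipartite $G$, $\mathcal{C}_B(G)$ and $\mathcal{C}_W(G)$ are the sets of channels consisting only of black, resp. only of white, vertices. The channel-preserving moves are: (VC) 2-valent vertex contraction: for a vertex $v$ of degree $2$ adjacent to two distinct vertices $v_1,v_2$, contract both edges at $v$ (merging $v,v_1,v_2$ into one vertex) and delete any resulting self-loops; (ED) doubled edge deletion: delete two edges having the same pair of endpoints; (FV) forced vertex pair removal: for distinct adjacent vertices $v_1,v_2$ with $\deg v_1=1$, delete $v_1,v_2$ and all edges incident to them. In the bipartite case, the merged vertex in (VC) receives the common color of $v_1,v_2$. *)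

(* Defs.v *)
From HB Require Import structures.
From mathcomp Require Import all_boot.
Set Implicit Arguments. Unset Strict Implicit. Unset Printing Implicit Defensive.

(* A finite multigraph: a finite vertex type and an edge-multiplicity
   function; [color] is the black(true)/white(false) colouring used only
   in the bipartite part of the statement. *)
Record mgraph := MGraph {
  vert : finType;
  mult : vert -> vert -> nat;
  color : vert -> bool }.

Definition wf (G : mgraph) : Prop :=
  (forall x y : vert G, mult x y = mult y x) /\ (forall x : vert G, mult x x = 0).

Definition bipartite (G : mgraph) : Prop :=
  forall x y : vert G, 0 < mult x y -> color x != color y.

Definition deg (G : mgraph) (v : vert G) : nat := \sum_(u : vert G) mult v u.

Definition nbr_count (G : mgraph) (v : vert G) (C : {set vert G}) : nat :=
  \sum_(u in C) mult v u.

Definition channel (G : mgraph) (C : {set vert G}) : bool :=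
  [forall v, ~~ odd (nbr_count v C)].

Definition channels (G : mgraph) : {set {set vert G}} := [set C | channel C].
Definition bchannels (G : mgraph) : {set {set vert G}} :=
  [set C | channel C & C \subset [set x | color x]].
Definition wchannels (G : mgraph) : {set {set vert G}} :=
  [set C | channel C & C \subset [set x | ~~ color x]].

Definition ED_graph (G : mgraph) (u w : vert G) : mgraph :=
  MGraph (fun x y => if ((x == u) && (y == w)) || ((x == w) && (y == u))
                     then mult x y - 2 else mult x y) (@color G).

Definition FV_vert (G : mgraph) (v1 v2 : vert G) : finType :=
  {x : vert G | (x != v1) && (x != v2)}.
Definition FV_graph (G : mgraph) (v1 v2 : vert G) : mgraph :=
  @MGraph (FV_vert v1 v2) (fun x y => mult (val x) (val y)) (fun x => color (val x)).

(* (VC): merge v, v1, v2 into one vertex, represented by v1;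
   the new vertex set is V \ {v, v2}.  The multiplicity between two distinct
   new vertices is the number of edges between the corresponding classes;
   self-loops are deleted.  The merged vertex gets the colour of v1. *)
Definition VC_vert (G : mgraph) (v v2 : vert G) : finType :=
  {x : vert G | (x != v) && (x != v2)}.
Definition VC_class (G : mgraph) (v v1 v2 z : vert G) : {set vert G} :=
  if z == v1 then [set v; v1; v2] else [set z].
Definition VC_graph (G : mgraph) (v v1 v2 : vert G) : mgraph :=
  @MGraph (VC_vert v v2)
    (fun x y => if x == y then 0 else
       \sum_(a in VC_class v v1 v2 (val x)) \sum_(b in VC_class v v1 v2 (val y)) mult a b)
    (fun x => color (val x)).

Inductive move : mgraph -> mgraph -> Prop :=
  | move_VC (G : mgraph) (v v1 v2 : vert G) :
      v1 != v2 -> deg v = 2 -> 0 < mult v v1 -> 0 < mult v v2 ->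
      move G (VC_graph v v1 v2)
  | move_ED (G : mgraph) (u w : vert G) :
      u != w -> 2 <= mult u w -> move G (ED_graph u w)
  | move_FV (G : mgraph) (v1 v2 : vert G) :
      v1 != v2 -> deg v1 = 1 -> 0 < mult v1 v2 -> move G (FV_graph v1 v2).

(* Main.v *)
Require Import Defs.
From HB Require Import structures.
From mathcomp Require Import all_boot zify.
Set Implicit Arguments. Unset Strict Implicit. Unset Printing Implicit Defensive.

Lemma odd_sum (T : finType) (A : {pred T}) (F : T -> nat) :
  odd (\sum_(i in A) F i) = \big[addb/false]_(i in A) odd (F i).
Proof. by apply: (big_morph odd oddD). Qed.

Lemma card_bij (T1 T2 : finType) (A : {set T1}) (B : {set T2})
  (f : T1 -> T2) (g : T2 -> T1) :
  (forall x, x \in A -> f x \in B) -> (forall y, y \in B -> g y \in A) ->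
  (forall x, x \in A -> g (f x) = x) -> (forall y, y \in B -> f (g y) = y) ->
  #|A| = #|B|.
Proof.
move=> fA gB gf fg; apply/eqP; rewrite eqn_leq; apply/andP; split.
  rewrite -(card_in_imset (f:=f) (D:=A)); last first.
    by move=> x y xA yA e; rewrite -(gf x xA) -(gf y yA) e.
  by apply: subset_leq_card; apply/subsetP=> _ /imsetP[x xA ->]; apply: fA.
rewrite -(card_in_imset (f:=g) (D:=B)); last first.
  by move=> x y xA yA e; rewrite -(fg x xA) -(fg y yA) e.
by apply: subset_leq_card; apply/subsetP=> _ /imsetP[x xA ->]; apply: gB.
Qed.

Definition mono (G : mgraph) (b : bool) (C : {set vert G}) :=
  C \subset [set x | color x == b].

Lemma bchE G : bchannels G = [set C | channel C & mono true C].
Proof.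
apply/setP=> C; rewrite !inE /mono; congr (_ && _); apply: eq_subset_r => x.
by rewrite !inE; case: (color x).
Qed.

Lemma wchE G : wchannels G = [set C | channel C & mono false C].
Proof.
apply/setP=> C; rewrite !inE /mono; congr (_ && _); apply: eq_subset_r => x.
by rewrite !inE; case: (color x).
Qed.

Lemma odd_nz (G : mgraph) (a : vert G) (S : {set vert G}) :
  odd (nbr_count a S) -> exists2 u, u \in S & 0 < mult a u.
Proof.
move=> H; apply/exists_inP; apply: contraLR H; rewrite negb_exists_in => /forall_inP H.
rewrite /nbr_count big1 // => u /H; by case: (mult a u).
Qed.

Lemma ED_case (G : mgraph) (u w : vert G) : wf G ->
  u != w -> 2 <= mult u w ->
  forall C : {set vert G}, channel (G := ED_graph u w) C = channel C.
Proof.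
move=> [sym _] uw H2 C; apply: eq_forallb => x; congr (~~ _).
rewrite /nbr_count !odd_sum; apply: eq_bigr => y _ /=.
case: ifP => // /orP[] /andP[/eqP -> /eqP ->].
  by rewrite -{2}(subnK H2) oddD addbF.
by rewrite sym -{2}(subnK H2) oddD addbF.
Qed.

Section FV.
Variables (G : mgraph) (v1 v2 : vert G).
Hypotheses (wfG : wf G) (v12 : v1 != v2) (dv1 : deg v1 = 1) (m12 : 0 < mult v1 v2).

Let G' := FV_graph v1 v2.
Let T' := FV_vert v1 v2.

Lemma fv_sym (x y : vert G) : mult x y = mult y x. Proof. by case: wfG. Qed.

Lemma fv_m12 : mult v1 v2 = 1 /\ forall x : vert G, x != v2 -> mult v1 x = 0.
Proof.
have := dv1; rewrite /deg (bigD1 v2) //=.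
move: m12; case: (mult v1 v2) => [//|[|n]] _; last by rewrite addSn.
move=> /eqP; rewrite add1n eqSS => /eqP /eqP; rewrite sum_nat_eq0 => /forall_inP H.
by split=> // x xv2; apply/eqP; apply: H.
Qed.

Lemma fv_0 (x : vert G) : x != v2 -> mult x v1 = 0.
Proof. by move=> h; rewrite fv_sym; apply: (proj2 fv_m12). Qed.

Definition fr (C : {set vert G}) : {set T'} := [set y : T' | val y \in C].
Definition fl0 (C' : {set T'}) : {set vert G} := val @: C'.
Definition fl (C' : {set T'}) : {set vert G} :=
  if odd (nbr_count v2 (fl0 C')) then v1 |: fl0 C' else fl0 C'.

Lemma fl0_sum C' (F : vert G -> nat) : \sum_(z in fl0 C') F z = \sum_(y in C') F (val y).
Proof. by rewrite big_imset //; move=> x y _ _; apply: val_inj. Qed.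

Lemma fl0P C' z : z \in fl0 C' -> (z != v1) && (z != v2).
Proof. by case/imsetP=> -[y py] _ ->. Qed.

Lemma fl0_val C' (y : T') : (val y \in fl0 C') = (y \in C').
Proof. by rewrite mem_imset //; apply: val_inj. Qed.

Lemma v1_fl0 C' : v1 \notin fl0 C'.
Proof. by apply/negP=> /fl0P; rewrite eqxx. Qed.
Lemma v2_fl0 C' : v2 \notin fl0 C'.
Proof. by apply/negP=> /fl0P; rewrite eqxx andbF. Qed.

Lemma v2_fl C' : v2 \notin fl C'.
Proof. by rewrite /fl; case: ifP; rewrite ?in_setU1 (negbTE (v2_fl0 C')) // eq_sym (negbTE v12). Qed.

Lemma fl_count (x : vert G) C' : x != v2 -> nbr_count x (fl C') = nbr_count x (fl0 C').
Proof.
by move=> h; rewrite /fl; case: ifP => // _; rewrite /nbr_count big_setU1 ?v1_fl0 //= fv_0.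
Qed.

Lemma fl_val C' (y : T') : (val y \in fl C') = (y \in C').
Proof.
rewrite /fl; case: ifP => _; rewrite ?in_setU1 fl0_val //.
by case/andP: (valP y) => /negbTE ->.
Qed.

Lemma fr_fl C' : fr (fl C') = C'.
Proof. by apply/setP=> y; rewrite inE fl_val. Qed.

Lemma count'E (x : T') C' : nbr_count (G:=G') x C' = nbr_count (val x) (fl0 C').
Proof. by rewrite /nbr_count fl0_sum. Qed.

Lemma ch_v1 C : channel C -> v2 \notin C.
Proof.
move=> /forallP /(_ v1); apply: contraL => v2C.
rewrite /nbr_count (bigD1 v2) //= (proj1 fv_m12) big1 // => u /andP[_ h].
exact: (proj2 fv_m12).
Qed.

Lemma fl0_fr C : fl0 (fr C) = C :\ v1 :\ v2.
Proof.
apply/setP=> z; rewrite !inE; apply/idP/idP.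
  case/imsetP=> y; rewrite inE => yC ->; case/andP: (valP y) => -> ->; exact: yC.
case/and3P=> h2 h1 zC; have Pz : (z != v1) && (z != v2) by rewrite h1 h2.
by rewrite -[z]/(val (Sub z Pz : T')) fl0_val inE.
Qed.

Lemma fl_fr C : channel C -> fl (fr C) = C.
Proof.
move=> ch; have v2C := ch_v1 ch.
have E : C :\ v1 :\ v2 = C :\ v1.
  by apply/setP=> z; rewrite !inE; case: (eqVneq z v2) => [->|] //=; rewrite (negbTE v2C) andbF.
move/forallP: (ch) => /(_ v2); rewrite /fl fl0_fr E.
case: (boolP (v1 \in C)) => v1C.
  rewrite -{1}(setD1K v1C) /nbr_count big_setU1 ?setD11 //= fv_sym (proj1 fv_m12) /=.
  by rewrite negbK => ->; rewrite setD1K.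
have -> : C :\ v1 = C.
  by apply/setP=> z; rewrite !inE; case: (eqVneq z v1) => [->|] //=; rewrite (negbTE v1C).
by move/negbTE ->.
Qed.

Lemma fr_ch C : channel C -> channel (G:=G') (fr C).
Proof.
move=> ch; apply/forallP=> x; rewrite count'E -fl_count; last by case/andP: (valP x).
by rewrite fl_fr //; move/forallP: ch.
Qed.

Lemma fl_ch C' : channel (G:=G') C' -> channel (fl C').
Proof.
move=> ch; apply/forallP=> z.
case: (eqVneq z v1) => [->|zv1].
  rewrite /nbr_count big1 // => u uC; apply: (proj2 fv_m12).
  by apply: contraTneq uC => ->; apply: v2_fl.
case: (eqVneq z v2) => [->|zv2].
  rewrite /fl; case: ifP => [odd2|]; last by move=> ->.
  by rewrite /nbr_count big_setU1 ?v1_fl0 //= fv_sym (proj1 fv_m12) /= odd2.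
have Pz : (z != v1) && (z != v2) by rewrite zv1 zv2.
rewrite fl_count // -[z]/(val (Sub z Pz : T')) -count'E.
by move/forallP: ch.
Qed.

Hypothesis bip : bipartite G.

Lemma fr_mono b C : mono b C -> mono (G:=G') b (fr C).
Proof.
by move=> /subsetP h; apply/subsetP=> y; rewrite !inE => /h; rewrite inE.
Qed.

Lemma fl_mono b C' : mono (G:=G') b C' -> mono b (fl C').
Proof.
move=> /subsetP h.
have h0 : mono b (fl0 C').
  by apply/subsetP=> _ /imsetP[y yC ->]; move: (h y yC); rewrite !inE.
rewrite /fl; case: ifP => // /odd_nz [u uC mu].
apply/subsetP=> z; rewrite in_setU1 => /orP[/eqP ->|]; last by move/(subsetP h0).
have cu := bip mu; have c12 := bip m12.
move/subsetP: h0 => /(_ u uC); rewrite !inE => /eqP <-.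
by move: cu c12; case: (color v1); case: (color v2); case: (color u).
Qed.

End FV.

Section VC.
Variables (G : mgraph) (v v1 v2 : vert G).
Hypotheses (wfG : wf G) (v12 : v1 != v2) (dv : deg v = 2)
  (m1 : 0 < mult v v1) (m2 : 0 < mult v v2).

Let G' := VC_graph v v1 v2.
Let T' := VC_vert v v2.

Lemma vc_sym (x y : vert G) : mult x y = mult y x. Proof. by case: wfG. Qed.
Lemma vc_diag (x : vert G) : mult x x = 0. Proof. by case: wfG. Qed.

Lemma vv1 : v != v1.
Proof. by apply: contraTneq m1 => ->; rewrite vc_diag. Qed.
Lemma vv2 : v != v2.
Proof. by apply: contraTneq m2 => ->; rewrite vc_diag. Qed.

Lemma vc_deg : [/\ mult v v1 = 1, mult v v2 = 1 &
  forall x : vert G, x != v1 -> x != v2 -> mult v x = 0].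
Proof.
have := dv; rewrite /deg (bigD1 v1) //= (bigD1 v2) //= ?(eq_sym v2) //.
move: m1 m2; case: (mult v v1) => [//|[|n]]; case: (mult v v2) => [//|[|k]] // _ _;
  rewrite ?addSn ?addnS //.
rewrite !add0n => -[] /eqP; rewrite sum_nat_eq0 => /forall_inP H.
split=> // x h1 h2; apply/eqP; apply: H; by rewrite h1 h2.
Qed.

Lemma mvx (x : vert G) : x != v1 -> x != v2 -> mult x v = 0.
Proof. by move=> h1 h2; rewrite vc_sym; case: vc_deg => _ _; apply. Qed.

Lemma pw1 : (v1 != v) && (v1 != v2).
Proof. by rewrite eq_sym vv1 v12. Qed.
Definition w1 : T' := Sub v1 pw1.

Lemma valw1 : val w1 = v1. Proof. by []. Qed.

Lemma val_w1 (y : T') : (val y == v1) = (y == w1).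
Proof. by rewrite -valw1 (inj_eq val_inj). Qed.

Lemma cls_sum (z : vert G) (F : vert G -> nat) :
  \sum_(b in VC_class v v1 v2 z) F b = if z == v1 then F v + F v1 + F v2 else F z.
Proof.
rewrite /VC_class; case: ifP => _; last by rewrite big_set1.
have -> : [set v; v1; v2] = v |: (v1 |: [set v2]) by apply/setP=> t; rewrite !inE orbA.
rewrite big_setU1 /=; last by rewrite !inE negb_or vv1 vv2.
by rewrite big_setU1 /= ?big_set1 ?addnA // inE.
Qed.

Lemma M_E1 (x y : T') : x != w1 ->
  mult (m:=G') x y = mult (val x) (val y) + (y == w1) * mult (val x) v2.
Proof.
move=> xw; have xv1 : val x != v1 by rewrite val_w1.
rewrite /= ; case: (eqVneq x y) => [<-|xy]; first by rewrite vc_diag (negbTE xw).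
rewrite -[sval x]/(val x) -[sval y]/(val y).
rewrite /VC_class (negbTE xv1) big_set1 cls_sum val_w1.
case: (eqVneq y w1) => [->|_] /=; last by rewrite mul0n addn0.
have xv2 : val x != v2 by case/andP: (valP x).
by rewrite mvx // add0n mul1n.
Qed.

Lemma M_E2 (y : T') : mult (m:=G') w1 y =
  if w1 == y then 0 else mult v (val y) + mult v1 (val y) + mult v2 (val y).
Proof.
rewrite /=; case: ifP => // /negbT wy.
rewrite -[sval y]/(val y) cls_sum eqxx.
by rewrite /VC_class val_w1 eq_sym (negbTE wy) !big_set1.
Qed.

Definition vr (C : {set vert G}) : {set T'} := [set y : T' | val y \in C].
Definition vl0 (C' : {set T'}) : {set vert G} :=
  if w1 \in C' then v2 |: val @: C' else val @: C'.
Definition vl (C' : {set T'}) : {set vert G} :=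
  if odd (nbr_count v1 (vl0 C')) then v |: vl0 C' else vl0 C'.

Lemma imv_val (C' : {set T'}) (y : T') : (val y \in val @: C') = (y \in C').
Proof. by rewrite mem_imset //; apply: val_inj. Qed.
Lemma imvP (C' : {set T'}) z : z \in val @: C' -> (z != v) && (z != v2).
Proof. by case/imsetP=> -[y py] _ ->. Qed.
Lemma v2_im (C' : {set T'}) : v2 \notin val @: C'.
Proof. by apply/negP=> /imvP; rewrite eqxx andbF. Qed.
Lemma v_vl0 (C' : {set T'}) : v \notin vl0 C'.
Proof.
rewrite /vl0; case: ifP => _; rewrite ?in_setU1 ?(negbTE vv2) /=;
  by apply/negP=> /imvP; rewrite eqxx.
Qed.

Lemma sum_im (C' : {set T'}) (F : vert G -> nat) : \sum_(z in val @: C') F z = \sum_(y in C') F (val y).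
Proof. by rewrite big_imset //; move=> x y _ _; apply: val_inj. Qed.

Lemma sum_vl0 (C' : {set T'}) (F : vert G -> nat) :
  \sum_(z in vl0 C') F z = \sum_(y in C') F (val y) + (w1 \in C') * F v2.
Proof.
rewrite /vl0; case: (w1 \in C'); last by rewrite sum_im mul0n addn0.
by rewrite big_setU1 ?v2_im //= sum_im mul1n addnC.
Qed.

Lemma sum_vl (C' : {set T'}) (F : vert G -> nat) :
  \sum_(z in vl C') F z = \sum_(z in vl0 C') F z + odd (nbr_count v1 (vl0 C')) * F v.
Proof.
rewrite /vl; case: (odd _); last by rewrite mul0n addn0.
by rewrite big_setU1 ?v_vl0 //= mul1n addnC.
Qed.

Lemma sum_ind (C' : {set T'}) c : \sum_(y in C') (y == w1) * c = (w1 \in C') * c.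
Proof.
case: (boolP (w1 \in C')) => h.
  rewrite (bigD1 w1) //= eqxx big1 ?addn0 // => y /andP[_ /negbTE ->]; by [].
by rewrite big1 // => y yC; have /negbTE -> : y != w1 by apply: contraNneq h => <-.
Qed.

Lemma E1 (x : T') (C' : {set T'}) : x != w1 -> nbr_count (G:=G') x C' = nbr_count (val x) (vl C').
Proof.
move=> xw; rewrite /nbr_count sum_vl sum_vl0 mvx; last first.
  by case/andP: (valP x). by rewrite val_w1.
rewrite muln0 addn0 (eq_bigr _ (fun y _ => M_E1 y xw)) big_split /= sum_ind.
by [].
Qed.

Lemma sum_w1 (C' : {set T'}) (F : vert G -> nat) :
  \sum_(y in C') (if w1 == y then 0 else F (val y)) + (w1 \in C') * F v1
  = \sum_(y in C') F (val y).
Proof.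
case: (boolP (w1 \in C')) => h.
  rewrite (bigD1 w1) //= eqxx (bigD1 w1 h) /= mul1n add0n addnC; congr (_ + _).
  by apply: eq_bigr => y /andP[_ /negbTE]; rewrite eq_sym => ->.
rewrite mul0n addn0; apply: eq_bigr => y yC.
by have /negbTE -> : w1 != y by apply: contraNneq h => ->.
Qed.

Lemma E2 (C' : {set T'}) : odd (nbr_count (G:=G') w1 C') =
  odd (nbr_count v (vl C') + nbr_count v1 (vl C') + nbr_count v2 (vl C')).
Proof.
set F := fun b => mult v b + mult v1 b + mult v2 b.
have HL : nbr_count v (vl C') + nbr_count v1 (vl C') + nbr_count v2 (vl C')
   = \sum_(b in vl C') F b by rewrite /nbr_count /F !big_split.
have Hw : nbr_count (G:=G') w1 C' = \sum_(y in C') (if w1 == y then 0 else F (val y)).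
  by apply: eq_bigr => y _; rewrite M_E2.
case: vc_deg => e1 e2 _.
have Fv : F v = 2 by rewrite /F vc_diag vc_sym e1 vc_sym e2.
have Fv12 : F v1 + F v2 = (mult v1 v2).+1.*2.
  rewrite /F e1 e2 vc_diag vc_diag (vc_sym v2 v1) -addnn; lia.
have o12 : odd (F v1) = odd (F v2).
  by move: (congr1 odd Fv12); rewrite oddD odd_double; case: (odd (F v1)); case: (odd (F v2)).
rewrite HL sum_vl sum_vl0 -(sum_w1 C' F) -Hw Fv.
by rewrite !oddD !oddM o12 addbK /= andbF addbF.
Qed.

Lemma cnt_v S : nbr_count v S = (v1 \in S) + (v2 \in S).
Proof.
case: vc_deg => e1 e2 e0.
rewrite /nbr_count big_mkcond (bigD1 v1) //= (bigD1 v2) ?(eq_sym v2) //= big1.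
  by rewrite e1 e2 addn0; case: (v1 \in S); case: (v2 \in S).
by move=> i /andP[h1 h2]; rewrite e0 ?if_same.
Qed.

Lemma v1_vl (C' : {set T'}) : (v1 \in vl C') = (w1 \in C').
Proof.
have -> : (v1 \in vl C') = (v1 \in vl0 C').
  by rewrite /vl; case: ifP; rewrite // in_setU1 eq_sym (negbTE vv1).
rewrite /vl0; case: ifP => h; rewrite ?in_setU1 ?(negbTE v12) /= -valw1 imv_val //.
Qed.

Lemma v2_vl (C' : {set T'}) : (v2 \in vl C') = (w1 \in C').
Proof.
have -> : (v2 \in vl C') = (v2 \in vl0 C').
  by rewrite /vl; case: ifP; rewrite // in_setU1 eq_sym (negbTE vv2).
by rewrite /vl0; case: ifP => h; rewrite ?in_setU1 ?eqxx // (negbTE (v2_im C')).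
Qed.

Lemma even_v (C' : {set T'}) : ~~ odd (nbr_count v (vl C')).
Proof. by rewrite cnt_v v1_vl v2_vl; case: (w1 \in C'). Qed.

Lemma vl_val (C' : {set T'}) (y : T') : (val y \in vl C') = (y \in C').
Proof.
case/andP: (valP y) => yv yv2.
rewrite /vl /vl0; case: ifP => _; case: ifP => _;
  rewrite ?in_setU1 ?(negbTE yv) ?(negbTE yv2) /= imv_val //.
Qed.

Lemma vr_vl (C' : {set T'}) : vr (vl C') = C'.
Proof. by apply/setP=> y; rewrite inE vl_val. Qed.

Lemma ch_v12 C : channel C -> (v1 \in C) = (v2 \in C).
Proof.
move=> /forallP /(_ v); rewrite cnt_v.
by case: (v1 \in C); case: (v2 \in C).
Qed.

Lemma vl0_vr C : channel C -> vl0 (vr C) = C :\ v.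
Proof.
move=> ch; apply/setP=> z; rewrite in_setD1.
case: (eqVneq z v) => [->|zv] /=; first by rewrite (negbTE (v_vl0 _)).
have memim : (z \in val @: vr C) = (z != v2) && (z \in C).
  apply/idP/idP.
    by case/imsetP=> -[y py] ; rewrite inE /= => yC ->; case/andP: py => _ ->.
  case/andP=> zv2 zC; have Pz : (z != v) && (z != v2) by rewrite zv zv2.
  by rewrite -[z]/(val (Sub z Pz : T')) imv_val inE.
have hw : (w1 \in vr C) = (v2 \in C) by rewrite -ch_v12 // inE.
rewrite /vl0 hw; case: (boolP (v2 \in C)) => h.
  by rewrite in_setU1 memim; case: eqVneq => [->|].
by rewrite memim; case: eqVneq => [->|] //=; rewrite (negbTE h).
Qed.

Lemma vl_vr C : channel C -> vl (vr C) = C.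
Proof.
move=> ch; rewrite /vl vl0_vr //.
move/forallP: (ch) => /(_ v1).
case: (boolP (v \in C)) => vC.
  rewrite -{1}(setD1K vC) /nbr_count big_setU1 ?setD11 //= vc_sym.
  case: vc_deg => -> _ _; rewrite /= negbK => ->; by rewrite setD1K.
have -> : C :\ v = C.
  by apply/setP=> z; rewrite !inE; case: (eqVneq z v) => [->|] //=; rewrite (negbTE vC).
by move/negbTE ->.
Qed.

Lemma vr_ch C : channel C -> channel (G:=G') (vr C).
Proof.
move=> ch; apply/forallP=> x; case: (eqVneq x w1) => [->|xw].
  rewrite E2 vl_vr // !oddD.
  by move/forallP: ch => ch; rewrite (negbTE (ch v)) (negbTE (ch v1)) (negbTE (ch v2)).
by rewrite E1 // vl_vr //; move/forallP: ch.
Qed.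

Lemma vl_ch (C' : {set T'}) : channel (G:=G') C' -> channel (vl C').
Proof.
move=> ch; apply/forallP=> z.
case: (eqVneq z v) => [->|zv]; first exact: even_v.
case: (eqVneq z v1) => [->|zv1].
  rewrite /vl; case: ifP => [odd1|]; last by move=> ->.
  rewrite /nbr_count big_setU1 ?v_vl0 //= vc_sym; case: vc_deg => -> _ _.
  by rewrite /= odd1.
case: (eqVneq z v2) => [->|zv2].
  move/forallP: ch => /(_ w1); rewrite E2 !oddD (negbTE (even_v C')).

  suff -> : odd (nbr_count v1 (vl C')) = false by [].
  rewrite /vl; case: ifP => [odd1|]; last by [].
  rewrite /nbr_count big_setU1 ?v_vl0 //= vc_sym; case: vc_deg => -> _ _.
  by rewrite /= odd1.
have Pz : (z != v) && (z != v2) by rewrite zv zv2.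
have xw : (Sub z Pz : T') != w1 by rewrite -val_w1.
by rewrite -[z]/(val (Sub z Pz : T')) -E1 //; move/forallP: ch.
Qed.

Hypothesis bip : bipartite G.

Lemma vr_mono b C : mono b C -> mono (G:=G') b (vr C).
Proof.
by move=> /subsetP h; apply/subsetP=> y; rewrite !inE => /h; rewrite inE.
Qed.

Lemma vl_mono b C' : mono (G:=G') b C' -> mono b (vl C').
Proof.
move=> /subsetP h.
have c1 := bip m1; have c2 := bip m2.
have hi : mono b (val @: C').
  by apply/subsetP=> _ /imsetP[y yC ->]; move: (h y yC); rewrite !inE.
have h0 : mono b (vl0 C').
  rewrite /vl0; case: ifP => // wC.
  apply/subsetP=> z; rewrite in_setU1 => /orP[/eqP ->|]; last by move/(subsetP hi).
  move: (h w1 wC); rewrite !inE /= => /eqP <-.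
  by move: c1 c2; case: (color v); case: (color v1); case: (color v2).
rewrite /vl; case: ifP => // /odd_nz [u uC mu].
apply/subsetP=> z; rewrite in_setU1 => /orP[/eqP ->|]; last by move/(subsetP h0).
have cu := bip mu.
move/subsetP: h0 => /(_ u uC); rewrite !inE => /eqP <-.
by move: cu c1; case: (color v1); case: (color v); case: (color u).
Qed.

End VC.

Lemma transfer (G G' : mgraph) (f : {set vert G} -> {set vert G'}) g :
 (forall C, channel C -> channel (f C)) -> (forall C', channel C' -> channel (g C')) ->
 (forall C, channel C -> g (f C) = C) -> (forall C', f (g C') = C') ->
 #|channels G| = #|channels G'|.
Proof.
move=> fc gc gf fg; apply: (card_bij (f:=f) (g:=g)) => [C|C|C|C]; rewrite !inE; auto.
Qed.

Lemma transferb (G G' : mgraph) (f : {set vert G} -> {set vert G'}) g :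
 (forall C, channel C -> channel (f C)) -> (forall C', channel C' -> channel (g C')) ->
 (forall C, channel C -> g (f C) = C) -> (forall C', f (g C') = C') ->
 (forall b C, mono b C -> mono b (f C)) -> (forall b C', mono b C' -> mono b (g C')) ->
 #|bchannels G| = #|bchannels G'| /\ #|wchannels G| = #|wchannels G'|.
Proof.
move=> fc gc gf fg fm gm; rewrite !bchE !wchE.
by split; apply: (card_bij (f:=f) (g:=g)) => C; rewrite !inE => /andP[h1 h2];
  rewrite ?fc ?gc ?fm ?gm ?gf ?fg.
Qed.

Theorem lemma6p2 (G G' : mgraph) :
  wf G -> move G G' ->
  #|channels G| = #|channels G'| /\
  (bipartite G ->
     #|bchannels G| = #|bchannels G'| /\ #|wchannels G| = #|wchannels G'|).
Proof.
move=> + mv; case: mv => [{}G v v1 v2 v12 dv m1 m2|{}G u w uw m2|{}G v1 v2 v12 dv m12] wfG.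
- split.
    apply: (@transfer G (VC_graph v v1 v2) (vr v v2) (vl wfG v12 m1)).
    + exact: (vr_ch wfG v12 dv m1 m2).
    + exact: (vl_ch wfG v12 dv m1 m2).
    + exact: (vl_vr wfG v12 dv m1 m2).
    + exact: (vr_vl wfG v12 m1).
  move=> bip; apply: (@transferb G (VC_graph v v1 v2) (vr v v2) (vl wfG v12 m1)).
  + exact: (vr_ch wfG v12 dv m1 m2).
  + exact: (vl_ch wfG v12 dv m1 m2).
  + exact: (vl_vr wfG v12 dv m1 m2).
  + exact: (vr_vl wfG v12 m1).
  + exact: vr_mono.
  + exact: (vl_mono wfG v12 m1 m2 bip).
- have E := ED_case wfG uw m2.
  split.
    by apply: (@transfer G (ED_graph u w) id id) => C //=; rewrite ?E.
  move=> _; apply: (@transferb G (ED_graph u w) id id) => // C; rewrite ?E //.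
- split.
    apply: (@transfer G (FV_graph v1 v2) (fr v1 v2) (@fl G v1 v2)).
    + exact: (fr_ch wfG dv m12).
    + exact: (fl_ch wfG v12 dv m12).
    + exact: (fl_fr wfG dv m12).
    + exact: fr_fl.
  move=> bip; apply: (@transferb G (FV_graph v1 v2) (fr v1 v2) (@fl G v1 v2)).
  + exact: (fr_ch wfG dv m12).
  + exact: (fl_ch wfG v12 dv m12).
  + exact: (fl_fr wfG dv m12).
  + exact: fr_fl.
  + exact: fr_mono.
  + exact: (fl_mono m12 bip).
Qed.
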